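(* Let $I\subset S=K[x_1,\dots,x_t]$ be an $\mathfrak m$-primary monomial ideal with $x_i^{a_i}\in\mathscr G(I)$, $a_i\in\mathbb Z_{>0}$, for $i=1,\dots,t$. Then $v(I)\le \sum_{i=1}^t a_i - t$.
   Context: $K$ is a field, $S$ is standard graded and $\mathfrak m=\langle x_1,\dots,x_t\rangle$. For a proper graded ideal $I$, the $v$-number is $v(I)=\min\{k\ge 0 : \exists f\in S_k,\ \mathcal P\in\operatorname{Ass}(S/I) \text{ with } (I:f)=\mathcal P\}$. $\mathscr G(I)$ is the minimal monomial generating set of the monomial ideal $I$. *)

(* Defs.v *)
From HB Require Import structures.
From mathcomp Require Import all_boot all_order all_algebra.
From mathcomp Require Import mpoly.
Set Implicit Arguments. Unset Strict Implicit. Unset Printing Implicit Defensive.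
Import GRing.Theory.
Local Open Scope ring_scope.

Section Ideals.
Variables (K : fieldType) (t : nat).
Local Notation S := {mpoly K[t]}.

Definition gen_ideal (gs : seq S) : S -> Prop :=
  fun f => exists c : 'I_(size gs) -> S, f = \sum_(i < size gs) c i * gs`_i.

Definition is_ideal (J : S -> Prop) : Prop :=
  [/\ J 0, (forall f g, J f -> J g -> J (f + g)) & (forall f g, J f -> J (g * f))].

Definition prime_ideal (J : S -> Prop) : Prop :=
  [/\ is_ideal J, ~ J 1 & (forall f g, J (f * g) -> J f \/ J g)].

Definition colon (J : S -> Prop) (f : S) : S -> Prop := fun g => J (g * f).

Definition max_ideal : S -> Prop := gen_ideal [seq 'X_i | i <- enum 'I_t].

Definition monomial (u : S) : Prop := exists m : 'X_{1..t}, u = 'X_[m].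

Definition m_primary (J : S -> Prop) : Prop :=
  forall f, (exists e : nat, J (f ^+ e)) <-> max_ideal f.

(* u belongs to the minimal monomial generating set G(J) of the monomial
   ideal J: u is a monomial of J not strictly divisible by any other
   monomial of J. *)
Definition in_minGens (J : S -> Prop) (u : S) : Prop :=
  exists m : 'X_{1..t}, [/\ u = 'X_[m], J 'X_[m] &
    forall m' : 'X_{1..t}, J 'X_[m'] -> (forall i, (m' i <= m i)%N) -> m' = m].

Definition Ass (J : S -> Prop) (P : S -> Prop) : Prop :=
  prime_ideal P /\ exists g : S, forall h, P h <-> colon J g h.

(* property defining the set of which the v-number is the minimum *)
Definition v_cand (J : S -> Prop) (k : nat) : Prop :=
  exists f : S, f \is k.-homog /\
    exists P, Ass J P /\ forall h, colon J f h <-> P h.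

Definition is_v_number (J : S -> Prop) (v : nat) : Prop :=
  v_cand J v /\ forall k, v_cand J k -> (v <= k)%N.

End Ideals.

(* Main.v *)
Require Import Defs.
From HB Require Import structures.
From mathcomp Require Import all_boot all_order all_algebra.
From mathcomp Require Import mpoly.
From mathcomp Require Import zify ring.
From Stdlib Require Import Classical.
Set Implicit Arguments. Unset Strict Implicit. Unset Printing Implicit Defensive.
Import GRing.Theory.
Local Open Scope ring_scope.

Section Aux.
Variables (K : fieldType) (t : nat).
Local Notation S := {mpoly K[t]}.

Lemma gen_is_ideal (gs : seq S) : is_ideal (gen_ideal gs).
Proof.
split.
- exists (fun _ => 0); by rewrite big1 // => i _; rewrite mul0r.
- move=> f g [c1 ->] [c2 ->]; exists (fun i => c1 i + c2 i).
  by rewrite -big_split /=; apply: eq_bigr => i _; rewrite mulrDl.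
- move=> f g [c ->]; exists (fun i => g * c i).
  by rewrite mulr_sumr; apply: eq_bigr => i _; rewrite mulrA.
Qed.

Lemma gen_mem (gs : seq S) x : x \in gs -> gen_ideal gs x.
Proof.
move=> xin; have hi : (index x gs < size gs)%N by rewrite index_mem.
exists (fun j => if j == Ordinal hi then 1 else 0).
rewrite (bigD1 (Ordinal hi)) //= eqxx mul1r nth_index // big1 ?addr0 //.
by move=> j /negbTE ->; rewrite mul0r.
Qed.

Lemma gen_sub (gs : seq S) (J : S -> Prop) f : is_ideal J ->
  (forall x, x \in gs -> J x) -> gen_ideal gs f -> J f.
Proof.
move=> [J0 JD JM] Hg [c ->].
apply: (big_ind J) => // i _; apply: JM; apply: Hg; exact: mem_nth.
Qed.

Definition v0 : 'I_t -> K := fun _ => 0.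

Lemma max_X i : max_ideal ('X_i : S).
Proof. by apply: gen_mem; apply: map_f; rewrite mem_enum. Qed.

Lemma max_ev_l f : max_ideal f -> meval v0 f = 0.
Proof.
apply: (gen_sub (J := fun f => meval v0 f = 0)).
- split; first by rewrite meval0.
  + by move=> p q hp hq; rewrite mevalD hp hq addr0.
  + by move=> p q hp; rewrite mevalM hp mulr0.
- by move=> x /mapP [i _ ->]; rewrite mevalXU.
Qed.

Lemma max_diff (p : S) : max_ideal (p - (meval v0 p)%:MP).
Proof.
have [I0 ID IM] := gen_is_ideal [seq 'X_i | i <- enum 'I_t].
elim/mpolyind: p => [|c m p _ _ IH].
  by rewrite meval0 mpolyC0 subrr.
have -> : c *: 'X_[m] + p - (meval v0 (c *: 'X_[m] + p))%:MP =
   c%:MP * ('X_[m] - (meval v0 'X_[m])%:MP) + (p - (meval v0 p)%:MP).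
  rewrite mevalD mevalZ mpolyCD mpolyCM -mul_mpolyC; ring.
apply: (ID) => //; apply: (IM).
have [->|mn0] := eqVneq m 0%MM.
  by rewrite mpolyX0 meval1 mpolyC1 subrr.
have [i mi] : exists i, (0 < m i)%N.
  apply/existsP; move: mn0; apply: contraR; rewrite negb_exists => /forallP H.
  by apply/eqP/mnmP => j; rewrite mnm0E; move: (H j); rewrite lt0n negbK => /eqP.
rewrite mevalX (bigD1 i) //= /v0 expr0n.
have -> : (m i == 0%N) = false by move: mi; case: (m i).
rewrite mul0r mpolyC0 subr0 mpolyXE_id (bigD1 i) //=.
have -> : m i = (m i).-1.+1 by move: mi; case: (m i).
by rewrite exprS -mulrA mulrC; apply: (IM); apply: max_X.
Qed.

Lemma max_ev f : max_ideal f <-> meval v0 f = 0.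
Proof.
split; first exact: max_ev_l.
by move=> H; have := max_diff f; rewrite H mpolyC0 subr0.
Qed.

Lemma max_prime : prime_ideal (@max_ideal K t).
Proof.
split; first exact: gen_is_ideal.
- by rewrite max_ev meval1; apply/eqP; exact: oner_neq0.
- move=> f g; rewrite !max_ev mevalM => /eqP; rewrite mulf_eq0.
  by case/orP => /eqP H; [left|right].
Qed.

End Aux.

Section Main.
Variables (K : fieldType) (t : nat).
Local Notation S := {mpoly K[t]}.

Lemma mono_in (J : S -> Prop) (a : 'I_t -> nat) : is_ideal J ->
  (forall i, J ('X_i ^+ a i)) ->
  forall (m : 'X_{1..t}) i, (a i <= m i)%N -> J 'X_[m].
Proof.
move=> [J0 JD JM] HXa m i le.
pose m' := [multinom (if j == i then (m j - a i)%N else m j) | j < t].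
have -> : m = (m' + U_(i) *+ a i)%MM.
  apply/mnmP => j; rewrite mnmDE mulmnE mnm1E mnmE.
  case: (eqVneq j i) => [->|ne]; first (rewrite ?eqxx /=; lia).
  by rewrite mul0n addn0.
by rewrite mpolyXD -mpolyXn; apply: (JM); apply: HXa.
Qed.

Lemma socle (J : S -> Prop) (a : 'I_t -> nat) : is_ideal J ->
  (forall i, J ('X_i ^+ a i)) ->
  forall n (m : 'X_{1..t}), (\sum_i (a i - m i) < n)%N -> ~ J 'X_[m] ->
  exists m' : 'X_{1..t}, ~ J 'X_[m'] /\ forall i, J 'X_[m' + U_(i)].
Proof.
move=> Jid HXa; elim=> [|n IH] m lt nJ; first by [].
case: (classic (forall i, J 'X_[m + U_(i)])) => [H|]; first by exists m.
move=> /not_all_ex_not [i nJi].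
have lti : (m i + 1 < a i)%N.
  case: (ltnP (m i + 1) (a i)) => // le; case: nJi.
  by apply: (mono_in Jid HXa (i := i)); rewrite mnmDE mnm1E eqxx.
apply: (IH (m + U_(i))%MM) => //.
have : (\sum_i0 (a i0 - (m + U_(i))%MM i0) < \sum_i (a i - m i))%N.
  rewrite (bigD1 i) //= [X in (_ < X)%N](bigD1 i) //= mnmDE mnm1E eqxx.
  rewrite (eq_bigr (fun j => a j - m j)%N); first by lia.
  by move=> j ne; rewrite mnmDE mnm1E eq_sym (negbTE ne) addn0.
lia.
Qed.

Lemma min_exists (P : nat -> Prop) k : P k ->
  exists v, (P v /\ forall k', P k' -> (v <= k')%N) /\ (v <= k)%N.
Proof.
move: {2}k (leqnn k) => n; elim: n k => [|n IH] k le Pk.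
  exists k; split=> //; split=> // k' _; lia.
case: (classic (exists k', P k' /\ (k' < k)%N)) => [[k' [Pk' lt]]|H].
  have [v [Hv le']] := IH k' ltac:(lia) Pk'.
  by exists v; split=> //; lia.
exists k; split=> //; split=> // k' Pk'.
case: (ltnP k' k) => // lt; case: H; by exists k'.
Qed.

End Main.

Theorem proposition4p3 (K : fieldType) (t : nat) (gens : seq {mpoly K[t]})
  (a : 'I_t -> nat) :
  (forall g, g \in gens -> monomial g) ->
  m_primary (gen_ideal gens) ->
  (forall i, (0 < a i)%N) ->
  (forall i, in_minGens (gen_ideal gens) ('X_i ^+ a i)) ->
  exists v : nat, is_v_number (gen_ideal gens) v /\
    (v <= (\sum_(i < t) a i) - t)%N.
Proof.
move=> _ Hprim _ Hmin.
set J := gen_ideal gens.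
have Jid : is_ideal J by apply: gen_is_ideal.
have HXa : forall i, J ('X_i ^+ a i).
  by move=> i; have [m [-> Jm _]] := Hmin i.
have nJ1 : ~ J 1.
  move=> J1; have : max_ideal (1 : {mpoly K[t]}).
    by apply/Hprim; exists 1%N; rewrite expr1.
  by move/max_ev; rewrite meval1; apply/eqP; exact: oner_neq0.
have [m [nJm Hm]] := socle Jid HXa (n := (\sum_i (a i - (0%MM : 'X_{1..t}) i)).+1)
   (m := 0%MM) (leqnn _) ltac:(by rewrite mpolyX0).
have lt : forall i, (m i < a i)%N.
  move=> i; case: (ltnP (m i) (a i)) => // le; case: nJm.
  exact: (mono_in Jid HXa le).
have [I0 ID IM] := Jid.
have fwd : forall h, max_ideal h -> J (h * 'X_[m]).
  move=> h.
  apply: (gen_sub (J := fun h => J (h * 'X_[m]))).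
  - split; first by rewrite mul0r.
    + by move=> f g hf hg; rewrite mulrDl; apply: (ID).
    + by move=> f g hf; rewrite -mulrA; apply: (IM).
  - by move=> x /mapP [i _ ->]; rewrite mulrC -mpolyXD; apply: Hm.
have col : forall h, max_ideal h <-> colon J 'X_[m] h.
  move=> h; rewrite /colon; split; first exact: fwd.
  move=> Hh; apply: NNPP => nh.
  have c0 : meval (@v0 K t) h != 0 by apply/eqP => /max_ev.
  set c := meval (@v0 K t) h in c0.
  have H1 : J ((h - c%:MP) * 'X_[m]) by apply: fwd; apply: max_diff.
  have H2 : J (c%:MP * 'X_[m]).
    have -> : c%:MP * 'X_[m] = h * 'X_[m] + (-1) * ((h - c%:MP) * 'X_[m]) by ring.
    by apply: ID => //; apply: IM.
  apply: nJm.
  have -> : 'X_[m] = (c^-1)%:MP * (c%:MP * 'X_[m]).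
    by rewrite mulrA -mpolyCM mulVf // mpolyC1 mul1r.
  by apply: (IM).
have vc : v_cand J (mdeg m).
  exists 'X_[m]; split; first by rewrite dhomogX.
  exists (@max_ideal K t); split.
    by split; [exact: max_prime | exists 'X_[m]].
  by move=> h; split => /col.
have [v [Hv le]] := min_exists vc.
exists v; split => //.
apply: (leq_trans le).
have e : (\sum_(i < t) 1)%N = t by rewrite sum1_card card_ord.
have : (mdeg m + \sum_(i < t) 1 <= \sum_(i < t) a i)%N.
  rewrite mdegE -big_split /=; apply: leq_sum => i _.
  by rewrite addn1; apply: lt.
rewrite e; lia.
Qed.
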